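(* Let $\mathbb{T}^2=(\mathbb{R}/2\pi\mathbb{Z})^2$, let $\varphi:\mathbb{T}^2\to\mathbb{R}$ be nontrivial and real-analytic, and let $w:\mathbb{T}^2\times\mathbb{T}^2\to\mathbb{R}$ be real-analytic with a unique non-degenerate minimum at $(0,0)$. Let $p\in U_\delta(0)$ with $\varphi(q_0(p))=0$. Then for the coefficients $\hat\alpha_1(p)$ and $\hat c_1(p)$ of the expansion described in the context, $|\hat\alpha_1(p)|+|\hat c_1(p)|\neq0$.
   Context: For $p\in\mathbb{T}^2$ write $w_p(q)=w(p,q)$. There is a neighborhood $U_\delta(0)\subset\mathbb{T}^2$ of $0$ and an analytic map $q_0:U_\delta(0)\to\mathbb{T}^2$ such that $q_0(p)$ is the unique non-degenerate minimum point of $w_p$; $m(p)=\min_q w_p(q)$, $M(p)=\max_q w_p(q)$. Let $\Omega(p;z)=\int_{\mathbb{T}^2}\frac{\varphi^2(s)\,ds}{w_p(s)-z}$ and, for $\mu>0$, $\Delta(\mu,p;z)=1-\mu\Omega(p;z)$. When $\varphi(q_0(p))=0$, set $\mu(p)=\left(\int_{\mathbb{T}^2}\frac{\varphi^2(s)ds}{w_p(s)-m(p)}\right)^{-1}>0$. In this case, for sufficiently small $m(p)-z>0$, one has the convergent expansion $\Delta(\mu,p;z)=1-\frac{\mu}{\mu(p)}-\mu\ln(m(p)-z)\sum_{n\ge1}\hat\alpha_n(p)(m(p)-z)^n-\mu\sum_{n\ge1}\hat c_n(p)(m(p)-z)^n$ with real coefficients $\hat\alpha_n(p),\hat c_n(p)$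 (independent of $\mu$), where $\ln$ is real for $m(p)-z>0$. *)

(* Defs.v *)
From Stdlib Require Import Reals Lra ZArith.
From Coquelicot Require Import Coquelicot.
Open Scope R_scope.

(** Points of R^n are represented as [nat -> R] (only coordinates < n matter);
    multi-indices as [nat -> nat]. *)
Definition pt := nat -> R.

Definition upd (x : pt) (i : nat) (t : R) : pt :=
  fun j => if Nat.eqb j i then t else x j.

Definition icons (i : nat) (k : nat -> nat) : nat -> nat :=
  fun j => match j with O => i | S j' => k j' end.

Fixpoint msum (n : nat) (F : (nat -> nat) -> R) : R :=
  match n with
  | O => F (fun _ => O)
  | S n' => Series (fun i => msum n' (fun k => F (icons i k)))
  end.

Fixpoint mabs_summable (n : nat) (F : (nat -> nat) -> R) : Prop :=
  match n with
  | O => True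
  | S n' => (forall i, mabs_summable n' (fun k => F (icons i k))) /\
            ex_series (fun i => msum n' (fun k => Rabs (F (icons i k))))
  end.

Fixpoint mono (n : nat) (k : nat -> nat) (h : pt) : R :=
  match n with
  | O => 1
  | S n' => h O ^ k O * mono n' (fun j => k (S j)) (fun j => h (S j))
  end.

Definition analytic (n : nat) (f : pt -> R) : Prop :=
  forall x : pt, exists r : R, 0 < r /\
    exists a : (nat -> nat) -> R,
      forall h : pt, (forall j, (j < n)%nat -> Rabs (h j) < r) ->
        mabs_summable n (fun k => a k * mono n k h) /\
        f (fun j => x j + h j) = msum n (fun k => a k * mono n k h).

Definition pt2 (a b : R) : pt :=
  fun j => match j with O => a | 1%nat => b | _ => 0 end.
Definition pt4 (a b c d : R) : pt :=
  fun j => match j with O => a | 1%nat => b | 2%nat => c | 3%nat => d | _ => 0 end.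

Definition partial (i : nat) (f : pt -> R) (x : pt) : R :=
  Derive (fun t => f (upd x i t)) (x i).
Definition hessian (f : pt -> R) (x : pt) (i j : nat) : R :=
  partial i (partial j f) x.

Fixpoint fsum (n : nat) (g : nat -> R) : R :=
  match n with O => 0 | S n' => fsum n' g + g n' end.

Definition nondeg_hessian (n : nat) (f : pt -> R) (x : pt) : Prop :=
  forall v : pt,
    (forall i, (i < n)%nat -> fsum n (fun j => hessian f x i j * v j) = 0) ->
    forall j, (j < n)%nat -> v j = 0.

(** Congruence modulo 2*pi (equality on the circle R/2piZ). *)
Definition eq2pi (a b : R) : Prop := exists k : Z, a - b = 2 * PI * IZR k.

Definition periodic2 (f : R -> R -> R) : Prop :=
  forall a b, f (a + 2 * PI) b = f a b /\ f a (b + 2 * PI) = f a b.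
Definition periodic4 (f : R -> R -> R -> R -> R) : Prop :=
  forall a b c d,
    f (a + 2 * PI) b c d = f a b c d /\ f a (b + 2 * PI) c d = f a b c d /\
    f a b (c + 2 * PI) d = f a b c d /\ f a b c (d + 2 * PI) = f a b c d.

Definition wp (w : R -> R -> R -> R -> R) (p1 p2 : R) : pt -> R :=
  fun x => w p1 p2 (x O) (x 1%nat).

Definition unique_nondeg_min_wp (w : R -> R -> R -> R -> R) (p1 p2 q1 q2 : R) : Prop :=
  (forall s1 s2, w p1 p2 q1 q2 <= w p1 p2 s1 s2) /\
  (forall s1 s2, w p1 p2 s1 s2 = w p1 p2 q1 q2 -> eq2pi s1 q1 /\ eq2pi s2 q2) /\
  nondeg_hessian 2 (wp w p1 p2) (pt2 q1 q2).

Definition Omega (phi : R -> R -> R) (w : R -> R -> R -> R -> R) (p1 p2 z : R) : R :=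
  RInt (fun s1 => RInt (fun s2 => (phi s1 s2) ^ 2 / (w p1 p2 s1 s2 - z)) 0 (2 * PI))
       0 (2 * PI).

Definition DeltaF phi w (mu p1 p2 z : R) : R := 1 - mu * Omega phi w p1 p2 z.

(* Main.v *)
Require Import Defs.
From Stdlib Require Import Reals ZArith Lra Lia FunctionalExtensionality.
From Coquelicot Require Import Coquelicot.
Open Scope R_scope.

Lemma cont_eps (g : R -> R) x :
  (forall e, 0 < e -> exists d, 0 < d /\ forall y, Rabs (y - x) < d -> Rabs (g y - g x) < e) ->
  continuous g x.
Proof.
  intros H. apply continuity_pt_filterlim.
  intros e He. destruct (H e He) as [d [Hd Hy]].
  exists d. split; [exact Hd|]. intros y [_ Hy']. apply Hy. exact Hy'.
Qed.

Lemma c2_1d f x y : continuity_2d_pt f x y -> continuous (fun v => f x v) y.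
Proof.
  intros H. apply cont_eps. intros e He.
  destruct (H (mkposreal e He)) as [d Hd]. exists d. split; [apply cond_pos|].
  intros v Hv. apply Hd; [|exact Hv]. rewrite Rminus_eq_0, Rabs_R0; apply cond_pos.
Qed.

Lemma RInt_minus_R (f g : R -> R) a b : ex_RInt f a b -> ex_RInt g a b ->
  RInt (fun x => f x - g x) a b = RInt f a b - RInt g a b.
Proof. intros Hf Hg. exact (RInt_minus f g a b Hf Hg). Qed.

Lemma RInt_scal_R (f : R -> R) a b l : ex_RInt f a b ->
  RInt (fun x => l * f x) a b = l * RInt f a b.
Proof. intros Hf. exact (RInt_scal f a b l Hf). Qed.

Definition c2 (f : R -> R -> R) := forall x y, continuity_2d_pt f x y.

Lemma inner_ex f x a b : c2 f -> ex_RInt (fun v => f x v) a b.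
Proof. intros H. apply (@ex_RInt_continuous R_CompleteNormedModule). intros z _. apply c2_1d, H. Qed.

Lemma inner_cont f a b x : a <= b -> c2 f -> continuous (fun u => RInt (fun v => f u v) a b) x.
Proof.
  intros Hab H. apply cont_eps. intros e He.
  assert (He' : 0 < e / (b - a + 1)) by (apply Rdiv_lt_0_compat; lra).
  destruct (uniform_continuity_2d f (x-1) (x+1) a b) with (eps := mkposreal _ He') as [d Hd].
  { intros; apply H. }
  exists (Rmin d 1). split. { apply Rmin_pos; [apply cond_pos|lra]. }
  intros y Hy.
  assert (Hy1 : Rabs (y - x) < d) by (eapply Rlt_le_trans; [exact Hy| apply Rmin_l]).
  assert (Hy2 : Rabs (y - x) < 1) by (eapply Rlt_le_trans; [exact Hy| apply Rmin_r]).
  pose proof (Rabs_def2 _ _ Hy2).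
  rewrite <- RInt_minus_R by (apply inner_ex; exact H).
  eapply Rle_lt_trans.
  - apply (abs_RInt_le_const _ a b (e / (b - a + 1))); [exact Hab| |].
    + apply (@ex_RInt_minus R_NormedModule); apply inner_ex; exact H.
    + intros t Ht. left. apply (Hd x t y t); try lra. rewrite Rminus_eq_0, Rabs_R0; apply cond_pos.
  - apply Rmult_lt_reg_r with (b - a + 1); [lra|].
    replace ((b - a) * (e / (b - a + 1)) * (b - a + 1)) with ((b - a) * e) by (field; lra).
    nra.
Qed.

Definition J a b (f : R -> R -> R) : R := RInt (fun u => RInt (fun v => f u v) a b) a b.

Lemma outer_ex f a b : a <= b -> c2 f -> ex_RInt (fun u => RInt (fun v => f u v) a b) a b.
Proof.
  intros Hab H. apply (@ex_RInt_continuous R_CompleteNormedModule). intros z _.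
  apply inner_cont; assumption.
Qed.

Lemma J_le f g a b : a <= b -> c2 f -> c2 g -> (forall u v, f u v <= g u v) -> J a b f <= J a b g.
Proof.
  intros Hab Hf Hg H. unfold J. apply RInt_le; try assumption; try (apply outer_ex; assumption).
  intros u _. apply RInt_le; try assumption; try (apply inner_ex; assumption).
  intros; apply H.
Qed.

Lemma J_lin f g h a b c : a <= b -> c2 f -> c2 g -> c2 h ->
  (forall u v, c * h u v <= f u v - g u v) -> c * J a b h <= J a b f - J a b g.
Proof.
  intros Hab Hf Hg Hh H.
  assert (E1 : J a b f - J a b g = J a b (fun u v => f u v - g u v)).
  { unfold J. rewrite <- RInt_minus_R by (apply outer_ex; assumption).
    apply RInt_ext. intros x _. rewrite RInt_minus_R by (apply inner_ex; assumption). reflexivity. }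
  assert (E2 : c * J a b h = J a b (fun u v => c * h u v)).
  { unfold J. rewrite <- RInt_scal_R by (apply outer_ex; assumption).
    apply RInt_ext. intros x _. rewrite RInt_scal_R by (apply inner_ex; assumption). reflexivity. }
  rewrite E1, E2. apply J_le; try assumption.
  - intros x y. apply continuity_2d_pt_mult; [apply continuity_2d_pt_const| apply Hh].
  - intros x y. apply continuity_2d_pt_minus; [apply Hf| apply Hg].
Qed.

Lemma pos1 (g : R -> R) a b c : a < b -> (forall x, a <= x <= b -> continuous g x) ->
  (forall x, a <= x <= b -> 0 <= g x) -> a <= c <= b -> 0 < g c -> 0 < RInt g a b.
Proof.
  intros Hab Hc Hnn Hcab Hgc.
  assert (Hc' := Hc c Hcab). apply continuity_pt_filterlim in Hc'.
  destruct (Hc' (g c / 2) ltac:(lra)) as [d [Hd Hdd]].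
  set (c1 := Rmax a (c - d/2)). set (c2' := Rmin b (c + d/2)).
  assert (H1 : a <= c1 <= c) by (unfold c1; split; [apply Rmax_l| apply Rmax_lub; lra]).
  assert (H2 : c <= c2' <= b) by (unfold c2'; split; [apply Rmin_glb; lra| apply Rmin_l]).
  assert (H3 : c1 < c2').
  { unfold c1, c2'. apply Rmax_lub_lt; apply Rmin_glb_lt; lra. }
  assert (H4 : c - d/2 <= c1) by apply Rmax_r.
  assert (H5 : c2' <= c + d/2) by apply Rmin_r.
  assert (Hex : forall u v, a <= u -> u <= v -> v <= b -> ex_RInt g u v).
  { intros u v Hu Huv Hv. apply (@ex_RInt_continuous R_CompleteNormedModule). intros z Hz.
    apply Hc. rewrite Rmin_left in Hz by lra. rewrite Rmax_right in Hz by lra. lra. }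
  rewrite <- (RInt_Chasles g a c1 b) by (apply Hex; lra).
  rewrite <- (RInt_Chasles g c1 c2' b) by (apply Hex; lra).
  change (0 < RInt g a c1 + (RInt g c1 c2' + RInt g c2' b)).
  assert (0 <= RInt g a c1) by (apply RInt_ge_0; [lra| apply Hex; lra| intros; apply Hnn; lra]).
  assert (0 <= RInt g c2' b) by (apply RInt_ge_0; [lra| apply Hex; lra| intros; apply Hnn; lra]).
  assert (0 < RInt g c1 c2').
  { apply RInt_gt_0; [lra| |intros; apply Hc; lra].
    intros x Hx. destruct (Req_dec c x) as [<-|Hne]; [exact Hgc|]. assert (Hb : Rabs (g x - g c) < g c / 2).
    { apply (Hdd x). split; [split; [exact I| exact Hne]|]. simpl. unfold R_dist. apply Rabs_def1; lra. }
    apply Rabs_def2 in Hb. lra. }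
  lra.
Qed.

Lemma J_pos f a b x y : a < b -> c2 f -> (forall u v, 0 <= f u v) -> a <= x <= b -> a <= y <= b ->
  0 < f x y -> 0 < J a b f.
Proof.
  intros Hab Hf Hnn Hx Hy Hp. unfold J.
  apply pos1 with x; try assumption.
  - intros; apply inner_cont; [lra| assumption].
  - intros; apply RInt_ge_0; [lra| apply inner_ex; assumption| intros; apply Hnn].
  - apply pos1 with y; try assumption.
    + intros; apply c2_1d, Hf.
    + intros; apply Hnn.
Qed.


Lemma mono_abs n : forall k h rho, (forall j, (j < n)%nat -> Rabs (h j) <= rho j) ->
  Rabs (mono n k h) <= mono n k rho.
Proof.
  induction n as [|n IH]; intros k h rho H; simpl.
  - rewrite Rabs_R1; lra.
  - rewrite Rabs_mult, <- RPow_abs. apply Rmult_le_compat.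
    + apply pow_le, Rabs_pos.
    + apply Rabs_pos.
    + apply pow_incr. split; [apply Rabs_pos| apply H; lia].
    + apply IH. intros j Hj. apply H. lia.
Qed.

Lemma mono_diff n : forall k h rho dl, 0 <= dl <= 1 ->
  (forall j, (j < n)%nat -> Rabs (h j) <= dl * rho j) ->
  (forall j, (j < n)%nat -> 0 <= rho j) ->
  Rabs (mono n k h - mono n k (fun _ => 0)) <= dl * mono n k rho.
Proof.
  induction n as [|n IH]; intros k h rho dl Hdl H Hr; simpl.
  - rewrite Rminus_eq_0, Rabs_R0; lra.
  - destruct (k O) as [|k0] eqn:Ek; simpl.
    + rewrite !Rmult_1_l. apply IH; [exact Hdl| |]; intros j Hj; [apply H|apply Hr]; lia.
    + rewrite !Rmult_0_l, Rminus_0_r, !Rabs_mult, <- RPow_abs.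
      assert (Hm : Rabs (mono n (fun j => k (S j)) (fun j => h (S j))) <= mono n (fun j => k (S j)) (fun j => rho (S j))).
      { apply mono_abs. intros j Hj. eapply Rle_trans; [apply H; lia|].
        assert (0 <= rho (S j)) by (apply Hr; lia). nra. }
      assert (H0 : Rabs (h O) <= dl * rho O) by (apply H; lia).
      assert (Hr0 : 0 <= rho O) by (apply Hr; lia).
      assert (Hp : Rabs (h O) ^ k0 <= rho O ^ k0).
      { apply pow_incr. split; [apply Rabs_pos| nra]. }
      assert (0 <= Rabs (h O) ^ k0) by (apply pow_le, Rabs_pos).
      assert (0 <= Rabs (mono n (fun j => k (S j)) (fun j => h (S j)))) by apply Rabs_pos.
      assert (0 <= rho O ^ k0) by (apply pow_le; lra).
      pose proof (Rabs_pos (h O)).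
      replace (dl * (rho O * rho O ^ k0 * mono n (fun j => k (S j)) (fun j => rho (S j))))
        with ((dl * rho O) * (rho O ^ k0 * mono n (fun j => k (S j)) (fun j => rho (S j)))) by ring.
      rewrite (Rmult_assoc (Rabs (h O))).
      apply Rmult_le_compat; try assumption.
      * apply Rmult_le_pos; assumption.
      * apply Rmult_le_compat; assumption.
Qed.

Lemma Rabs_norm (x : R) : norm x = Rabs x.
Proof. reflexivity. Qed.

Lemma Series_nonneg (a : nat -> R) : (forall n, 0 <= a n) -> ex_series a -> 0 <= Series a.
Proof.
  intros H Hex. assert (Series (fun _ => 0) <= Series a) by (apply Series_le; [intros; split; [lra|apply H]| exact Hex]).
  rewrite (Series_ext (fun _ => 0) (fun n => 0 * a n)) in H0 by (intros; ring).
  rewrite Series_scal_l, Rmult_0_l in H0. exact H0.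
Qed.

Lemma msum_dom n : forall G D c, 0 <= c -> mabs_summable n G ->
  (forall k, Rabs (D k) <= c * Rabs (G k)) ->
  mabs_summable n D /\ 0 <= msum n (fun k => Rabs (D k)) /\
  msum n (fun k => Rabs (D k)) <= c * msum n (fun k => Rabs (G k)) /\
  Rabs (msum n D) <= msum n (fun k => Rabs (D k)).
Proof.
  induction n as [|n IH]; intros G D c Hc HG HD; simpl.
  - repeat split; [apply Rabs_pos| apply HD| lra].
  - destruct HG as [HGi HGs].
    assert (IHi : forall i, mabs_summable n (fun k => D (icons i k)) /\
      0 <= msum n (fun k => Rabs (D (icons i k))) /\
      msum n (fun k => Rabs (D (icons i k))) <= c * msum n (fun k => Rabs (G (icons i k))) /\
      Rabs (msum n (fun k => D (icons i k))) <= msum n (fun k => Rabs (D (icons i k)))).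
    { intros i. apply (IH (fun k => G (icons i k))); [exact Hc| apply HGi| intros; apply HD]. }
    assert (Hs : ex_series (fun i => msum n (fun k => Rabs (D (icons i k))))).
    { apply (@ex_series_le R_AbsRing R_CompleteNormedModule _ (fun i => c * msum n (fun k => Rabs (G (icons i k))))).
      - intros i. rewrite Rabs_norm. destruct (IHi i) as [_ [H1 [H2 _]]]. rewrite Rabs_pos_eq; lra.
      - apply (ex_series_scal_l c _ HGs). }
    assert (Hs2 : ex_series (fun i => Rabs (msum n (fun k => D (icons i k))))).
    { apply (@ex_series_le R_AbsRing R_CompleteNormedModule _ (fun i => msum n (fun k => Rabs (D (icons i k))))); [|exact Hs].
      intros i. rewrite Rabs_norm, Rabs_Rabsolu. apply (IHi i). }
    split; [split; [intros i; apply (IHi i)| exact Hs]|].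
    split; [apply Series_nonneg; [intros i; apply (IHi i)| exact Hs]|].
    split.
    - rewrite <- Series_scal_l. apply Series_le; [|apply (ex_series_scal_l c _ HGs)].
      intros i; split; apply (IHi i).
    - eapply Rle_trans; [apply Series_Rabs; exact Hs2|].
      apply Series_le; [|exact Hs]. intros i; split; [apply Rabs_pos| apply (IHi i)].
Qed.

Lemma msum_ex n F : mabs_summable (S n) F -> ex_series (fun i => msum n (fun k => F (icons i k))).
Proof.
  intros [Hi Hs]. apply ex_series_Rabs.
  apply (@ex_series_le R_AbsRing R_CompleteNormedModule _ (fun i => msum n (fun k => Rabs (F (icons i k))))); [|exact Hs].
  intros i. rewrite Rabs_norm, Rabs_Rabsolu.
  destruct (msum_dom n (fun k => F (icons i k)) (fun k => F (icons i k)) 1) as [_ [_ [_ H]]];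
    [lra| apply Hi| intros; lra| exact H].
Qed.

Lemma msum_minus n : forall F G, mabs_summable n F -> mabs_summable n G ->
  msum n (fun k => F k - G k) = msum n F - msum n G.
Proof.
  induction n as [|n IH]; intros F G HF HG; [reflexivity|].
  simpl. rewrite <- Series_minus by (apply msum_ex; assumption).
  apply Series_ext. intros i. apply IH; [apply HF| apply HG].
Qed.

Lemma analytic_cont n f : analytic n f -> forall x e, 0 < e -> exists d, 0 < d /\
  forall y, (forall j, (j < n)%nat -> Rabs (y j - x j) < d) -> Rabs (f y - f x) < e.
Proof.
  intros Hf x e He. destruct (Hf x) as [r [Hr [a Ha]]].
  set (rho := fun _ : nat => r / 2).
  destruct (Ha rho) as [HG _]. { intros j _. unfold rho. rewrite Rabs_pos_eq; lra. }
  destruct (Ha (fun _ => 0)) as [H0s H0e]. { intros j _. rewrite Rabs_R0; lra. }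
  set (G := fun k => a k * mono n k rho) in *.
  destruct (msum_dom n G G 1) as [_ [HS _]]; [lra| exact HG| intros; lra|].
  set (S := msum n (fun k => Rabs (G k))) in *.
  set (dl := Rmin 1 (e / (S + 1))).
  assert (Hdl : 0 < dl) by (apply Rmin_pos; [lra| apply Rdiv_lt_0_compat; lra]).
  assert (Hdl1 : dl <= 1) by apply Rmin_l.
  assert (Hdl2 : dl * S < e).
  { assert (dl <= e / (S + 1)) by apply Rmin_r.
    assert (e / (S+1) * S < e).
    { replace (e / (S+1) * S) with (e * (S / (S+1))) by (field; lra).
      assert (S / (S+1) < 1) by (apply Rmult_lt_reg_r with (S+1); [lra|]; field_simplify; lra).
      nra. }
    nra. }
  exists (dl * (r / 2)). split; [nra|].
  intros y Hy.
  set (h := fun j => y j - x j).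
  destruct (Ha h) as [Hhs Hhe].
  { intros j Hj. unfold h. eapply Rlt_le_trans; [apply Hy; exact Hj|]. nra. }
  replace (fun j => x j + h j) with y in Hhe by (apply functional_extensionality; intros; unfold h; ring).
  replace (fun j => x j + 0) with x in H0e by (apply functional_extensionality; intros; ring).
  rewrite Hhe, H0e, <- msum_minus by assumption.
  destruct (msum_dom n G (fun k => a k * mono n k h - a k * mono n k (fun _ => 0)) dl)
    as [_ [_ [H1 H2]]]; [lra| exact HG| |].
  - intros k. unfold G. rewrite <- Rmult_minus_distr_l, !Rabs_mult.
    assert (Hm : Rabs (mono n k rho) = mono n k rho).
    { apply Rabs_pos_eq. eapply Rle_trans; [apply Rabs_pos| apply (mono_abs n k rho rho)]. intros; unfold rho; rewrite Rabs_pos_eq; lra. }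
    rewrite Hm.
    assert (Hd : Rabs (mono n k h - mono n k (fun _ => 0)) <= dl * mono n k rho).
    { apply mono_diff; [lra| |intros; unfold rho; lra].
      intros j Hj. left. unfold h, rho. apply Hy, Hj. }
    pose proof (Rabs_pos (a k)). nra.
  - eapply Rle_lt_trans; [exact H2|]. eapply Rle_lt_trans; [exact H1|]. exact Hdl2.
Qed.


Lemma lnb u : 0 < u <= 1 -> Rabs (ln (u ^ 2)) <= 2 / u.
Proof.
  intros Hu. rewrite ln_pow by lra.
  assert (Hl : ln u <= 0) by (rewrite <- ln_1; apply ln_le; lra).
  assert (Hi : ln (/ u) < / u).
  { assert (0 < / u) by (apply Rinv_0_lt_compat; lra).
    assert (/ u < exp (/ u)) by (pose proof (exp_ineq1 (/ u)); lra).
    rewrite <- (ln_exp (/ u)) at 2. apply ln_increasing; lra. }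
  rewrite ln_Rinv in Hi by lra. simpl INR.
  rewrite Rabs_left1 by lra. unfold Rdiv. lra.
Qed.

Lemma prefix_bound (a : nat -> R) N : exists B, forall n, (n < N)%nat -> Rabs (a n) <= B.
Proof.
  induction N as [|N [B HB]].
  - exists 0. intros; lia.
  - exists (Rmax B (Rabs (a N))). intros n Hn.
    destruct (Nat.eq_dec n N) as [->|Hne]; [apply Rmax_r|].
    eapply Rle_trans; [apply HB; lia| apply Rmax_l].
Qed.

Lemma seq_bound (a : nat -> R) : ex_series a -> exists B, 0 <= B /\ forall n, Rabs (a n) <= B.
Proof.
  intros H. apply ex_series_lim_0 in H. apply is_lim_seq_spec in H.
  destruct (H (mkposreal 1 Rlt_0_1)) as [N HN]. simpl in HN.
  destruct (prefix_bound a N) as [B HB].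
  exists (Rmax 1 B). split; [eapply Rle_trans; [|apply Rmax_l]; lra|].
  intros n. destruct (le_lt_dec N n) as [Hle|Hlt].
  - specialize (HN n Hle). rewrite Rminus_0_r in HN. eapply Rle_trans; [left; exact HN| apply Rmax_l].
  - eapply Rle_trans; [apply HB; exact Hlt| apply Rmax_r].
Qed.

Lemma SB (b : nat -> R) t0 : 0 < t0 -> b O = 0 -> ex_series (fun n => b n * t0 ^ S n) ->
  exists B, 0 <= B /\ forall t, 0 < t <= t0 / 2 -> Rabs (Series (fun n => b n * t ^ S n)) <= B * t ^ 2.
Proof.
  intros Ht0 Hb0 Hex. destruct (seq_bound _ Hex) as [B0 [HB0 HB]].
  exists (4 * B0 / t0 ^ 2). split.
  { apply Rmult_le_pos; [lra| apply Rlt_le, Rinv_0_lt_compat, pow_lt; lra]. }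
  intros t Ht. set (q := t / t0).
  assert (Hq : 0 < q <= 1/2).
  { unfold q. split; [apply Rdiv_lt_0_compat; lra|].
    apply Rmult_le_reg_r with t0; [lra|]. unfold Rdiv. rewrite Rmult_assoc, Rinv_l by lra. lra. }
  assert (Hterm : forall n, Rabs (b n * t ^ S n) <= 2 * B0 * q ^ 2 * (1/2) ^ n).
  { intros n. assert (Ht' : t = t0 * q) by (unfold q; field; lra).
    rewrite Ht', Rpow_mult_distr, <- Rmult_assoc, Rabs_mult, (Rabs_pos_eq (q ^ S n)) by (apply pow_le; lra).
    destruct n as [|m].
    - rewrite Hb0, !Rmult_0_l, Rabs_R0, Rmult_0_l. pose proof (pow_le (1/2) 0). apply Rmult_le_pos; [|simpl; lra].
      apply Rmult_le_pos; [lra| apply pow_le; lra].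
    - assert (Hqm : q ^ m <= (1/2) ^ m) by (apply pow_incr; lra).
      assert (0 <= q ^ m) by (apply pow_le; lra).
      specialize (HB (S m)). pose proof (Rabs_pos (b (S m) * t0 ^ S (S m))).
      replace (q ^ S (S m)) with (q ^ 2 * q ^ m) by (simpl; ring).
      replace (2 * B0 * q ^ 2 * (1 / 2) ^ S m) with (B0 * (q ^ 2 * (1/2) ^ m)) by (simpl; field).
      apply Rmult_le_compat; try assumption.
      + apply Rmult_le_pos; [apply pow_le; lra| assumption].
      + apply Rmult_le_compat_l; [apply pow_le; lra| assumption]. }
  assert (Hgeom : is_series (fun n => (1/2) ^ n) 2).
  { pose proof (is_series_geom (1/2) ltac:(rewrite Rabs_pos_eq; lra)) as G.
    replace (/ (1 - 1/2)) with 2 in G by field. exact G. }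
  assert (Hex2 : ex_series (fun n => 2 * B0 * q ^ 2 * (1/2) ^ n)).
  { apply (ex_series_scal_l (2 * B0 * q ^ 2) (fun n => (1/2) ^ n)). exists 2. exact Hgeom. }
  assert (Hexa : ex_series (fun n => Rabs (b n * t ^ S n))).
  { apply (@ex_series_le R_AbsRing R_CompleteNormedModule _ (fun n => 2 * B0 * q ^ 2 * (1/2) ^ n)); [|exact Hex2].
    intros n. change (norm (Rabs (b n * t ^ S n))) with (Rabs (Rabs (b n * t ^ S n))).
    rewrite Rabs_Rabsolu. apply Hterm. }
  eapply Rle_trans; [apply Series_Rabs; exact Hexa|].
  eapply Rle_trans; [apply Series_le; [intros n; split; [apply Rabs_pos| apply Hterm]| exact Hex2]|].
  rewrite (Series_scal_l (2 * B0 * q ^ 2) (fun n => (1/2) ^ n)), (is_series_unique _ _ Hgeom).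
  unfold q. right. field. lra.
Qed.

Lemma per_nat (f : R -> R) P : (forall a, f (a + P) = f a) -> forall n a, f (a + P * INR n) = f a.
Proof.
  intros H n. induction n as [|n IH]; intros a.
  - simpl. rewrite Rmult_0_r, Rplus_0_r. reflexivity.
  - rewrite S_INR. replace (a + P * (INR n + 1)) with ((a + P * INR n) + P) by ring.
    rewrite H. apply IH.
Qed.

Lemma per_Z (f : R -> R) P : (forall a, f (a + P) = f a) -> forall k a, f (a + P * IZR k) = f a.
Proof.
  intros H k a. destruct (Z_le_gt_dec 0 k) as [Hk|Hk].
  - rewrite <- (Z2Nat.id k) by exact Hk. rewrite <- INR_IZR_INZ. apply per_nat; exact H.
  - assert (Hk' : (0 <= - k)%Z) by lia.
    rewrite <- (Z.opp_involutive k), <- (Z2Nat.id (- k)) by exact Hk'.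
    rewrite opp_IZR, <- INR_IZR_INZ.
    rewrite <- (per_nat f P H (Z.to_nat (- k)) (a + P * - INR (Z.to_nat (- k)))).
    f_equal. ring.
Qed.

Lemma reduce P s : 0 < P -> exists k : Z, 0 <= s - P * IZR k <= P.
Proof.
  intros HP. destruct (archimed (s / P)) as [H1 H2].
  exists (up (s / P) - 1)%Z. rewrite minus_IZR. simpl IZR.
  assert (E : s = P * (s / P)) by (field; lra).
  split.
  - assert (P * (IZR (up (s / P)) - 1) <= P * (s / P)) by (apply Rmult_le_compat_l; lra). lra.
  - assert (P * (s / P) <= P * (IZR (up (s / P)))) by (apply Rmult_le_compat_l; lra). lra.
Qed.


Theorem lemma3p4
  (phi : R -> R -> R) (w : R -> R -> R -> R -> R)
  (Hphi_per : periodic2 phi)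
  (Hphi_an : analytic 2 (fun x => phi (x O) (x 1%nat)))
  (Hphi_nt : exists s1 s2, phi s1 s2 <> 0)
  (Hw_per : periodic4 w)
  (Hw_an : analytic 4 (fun x => w (x O) (x 1%nat) (x 2%nat) (x 3%nat)))
  (Hw_min : forall a b c d : R, ~ (eq2pi a 0 /\ eq2pi b 0 /\ eq2pi c 0 /\ eq2pi d 0) ->
              w 0 0 0 0 < w a b c d)
  (Hw_nd : nondeg_hessian 4 (fun x => w (x O) (x 1%nat) (x 2%nat) (x 3%nat))
             (pt4 0 0 0 0)) :
  exists delta : R, 0 < delta /\
  forall p1 p2 q1 q2 : R,
    Rabs p1 < delta -> Rabs p2 < delta ->
    unique_nondeg_min_wp w p1 p2 q1 q2 ->
    phi q1 q2 = 0 ->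
    let m := w p1 p2 q1 q2 in
    let mup := / Omega phi w p1 p2 m in
    forall (alpha c : nat -> R) (eps : R), 0 < eps ->
      (forall mu z, 0 < mu -> 0 < m - z < eps ->
         ex_series (fun n => alpha (S n) * (m - z) ^ (S n)) /\
         ex_series (fun n => c (S n) * (m - z) ^ (S n)) /\
         DeltaF phi w mu p1 p2 z =
           1 - mu / mup
             - mu * ln (m - z) * Series (fun n => alpha (S n) * (m - z) ^ (S n))
             - mu * Series (fun n => c (S n) * (m - z) ^ (S n))) ->
      Rabs (alpha 1%nat) + Rabs (c 1%nat) <> 0.
Proof.
  exists 1. split; [lra|].
  intros p1 p2 q1 q2 _ _ Hmin _ m mup alpha c eps Heps H Habs.
  assert (Ha1 : alpha 1%nat = 0).
  { pose proof (Rabs_pos (alpha 1%nat)). pose proof (Rabs_pos (c 1%nat)).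
    destruct (Req_dec (alpha 1%nat) 0) as [|Hn]; [assumption|].
    pose proof (Rabs_pos_lt _ Hn). lra. }
  assert (Hc1 : c 1%nat = 0).
  { pose proof (Rabs_pos (alpha 1%nat)). pose proof (Rabs_pos (c 1%nat)).
    destruct (Req_dec (c 1%nat) 0) as [|Hn]; [assumption|].
    pose proof (Rabs_pos_lt _ Hn). lra. }
  clear Habs.
  destruct Hmin as [Hm _].
  assert (Hm' : forall s1 s2, m <= w p1 p2 s1 s2) by exact Hm. clear Hm.
  set (P := 2 * PI).
  assert (HP : 0 < P) by (unfold P; pose proof PI_RGT_0; lra).
  assert (Hphic : c2 phi).
  { intros x y e. destruct (analytic_cont _ _ Hphi_an (pt2 x y) e (cond_pos e)) as [d [Hd Hc]].
    exists (mkposreal d Hd). intros u v Hu Hv. apply (Hc (pt2 u v)).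
    intros j Hj. destruct j as [|[|j]]; simpl; [exact Hu| exact Hv| lia]. }
  assert (HWc : c2 (fun s1 s2 => w p1 p2 s1 s2)).
  { intros x y e. destruct (analytic_cont _ _ Hw_an (pt4 p1 p2 x y) e (cond_pos e)) as [d [Hd Hc]].
    exists (mkposreal d Hd). intros u v Hu Hv. apply (Hc (pt4 p1 p2 u v)).
    intros j Hj. destruct j as [|[|[|[|j]]]]; simpl;
      [rewrite Rminus_eq_0, Rabs_R0; exact Hd| rewrite Rminus_eq_0, Rabs_R0; exact Hd| exact Hu| exact Hv| lia]. }
  set (T := eps / 2).
  assert (HT : 0 < T) by (unfold T; lra).
  set (g := fun t s1 s2 => phi s1 s2 ^ 2 / (w p1 p2 s1 s2 - (m - t))).
  assert (Hgc : forall t, 0 < t -> c2 (g t)).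
  { intros t Ht x y. unfold g.
    apply continuity_2d_pt_ext with (f := fun u v => (phi u v * (phi u v * 1)) * / (w p1 p2 u v - (m - t))).
    { intros; reflexivity. }
    apply continuity_2d_pt_mult.
    - apply continuity_2d_pt_mult; [apply Hphic|].
      apply continuity_2d_pt_mult; [apply Hphic| apply continuity_2d_pt_const].
    - apply continuity_2d_pt_inv.
      + apply continuity_2d_pt_minus; [apply HWc| apply continuity_2d_pt_const].
      + specialize (Hm' x y). lra. }
  set (h0 := fun s1 s2 => (phi s1 s2 * (phi s1 s2 * 1)) * / ((w p1 p2 s1 s2 - m + T) * (w p1 p2 s1 s2 - m + T))).
  assert (Hh0c : c2 h0).
  { intros x y. unfold h0. apply continuity_2d_pt_mult.
    - apply continuity_2d_pt_mult; [apply Hphic|].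
      apply continuity_2d_pt_mult; [apply Hphic| apply continuity_2d_pt_const].
    - apply continuity_2d_pt_inv.
      + apply continuity_2d_pt_mult; apply continuity_2d_pt_plus;
          try apply continuity_2d_pt_const; apply continuity_2d_pt_minus;
          try apply continuity_2d_pt_const; apply HWc.
      + specialize (Hm' x y). nra. }
  assert (Hh0nn : forall u v, 0 <= h0 u v).
  { intros u v. unfold h0. specialize (Hm' u v). apply Rmult_le_pos; [nra|].
    apply Rlt_le, Rinv_0_lt_compat. nra. }
  assert (Hbox : exists s1 s2, 0 <= s1 <= P /\ 0 <= s2 <= P /\ phi s1 s2 <> 0).
  { destruct Hphi_nt as [s1 [s2 Hs]].
    destruct (reduce P s1 HP) as [k1 Hk1]. destruct (reduce P s2 HP) as [k2 Hk2].
    exists (s1 - P * IZR k1), (s2 - P * IZR k2). split; [exact Hk1|]. split; [exact Hk2|].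
    assert (E1 : forall b, phi (s1 - P * IZR k1) b = phi s1 b).
    { intros b. rewrite <- (per_Z (fun a => phi a b) P) with (k := k1).
      - f_equal. ring.
      - intros a. apply (Hphi_per a b). }
    assert (E2 : forall a, phi a (s2 - P * IZR k2) = phi a s2).
    { intros a. rewrite <- (per_Z (fun b => phi a b) P) with (k := k2).
      - f_equal. ring.
      - intros b. apply (Hphi_per a b). }
    rewrite E2, E1. exact Hs. }
  set (K := J 0 P h0).
  assert (HK : 0 < K).
  { destruct Hbox as [s1 [s2 [Hs1 [Hs2 Hs]]]].
    apply (J_pos h0 0 P s1 s2); try assumption.
    unfold h0. specialize (Hm' s1 s2). apply Rmult_lt_0_compat.
    - rewrite Rmult_1_r. apply Rsqr_pos_lt. exact Hs.
    - apply Rinv_0_lt_compat. nra. }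
  assert (Hkey : forall t1 t2, 0 < t2 < t1 -> t1 <= T -> (t1 - t2) * K <= J 0 P (g t2) - J 0 P (g t1)).
  { intros t1 t2 Ht Ht1. apply J_lin; try (apply Hgc; lra); try assumption; [lra|].
    intros u v. unfold g, h0. specialize (Hm' u v).
    set (x := w p1 p2 u v - m). replace (w p1 p2 u v - (m - t2)) with (x + t2) by (unfold x; ring).
    replace (w p1 p2 u v - (m - t1)) with (x + t1) by (unfold x; ring).
    replace (w p1 p2 u v - m + T) with (x + T) by (unfold x; ring).
    assert (Hx : 0 <= x) by (unfold x; lra).
    set (ph := phi u v * (phi u v * 1)).
    replace (phi u v ^ 2) with ph by (unfold ph; ring).
    assert (Hph : 0 <= ph) by (unfold ph; nra).
    replace (ph / (x + t2) - ph / (x + t1)) with ((t1 - t2) * ph * / ((x + t2) * (x + t1))) by (field; lra).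
    rewrite <- Rmult_assoc. apply Rmult_le_compat_l; [nra|].
    apply Rinv_le_contravar; [nra|]. apply Rmult_le_compat; lra. }
  set (SA := fun t => Series (fun n => alpha (S n) * t ^ S n)).
  set (SC := fun t => Series (fun n => c (S n) * t ^ S n)).
  assert (HF : forall t, 0 < t < eps -> ex_series (fun n => alpha (S n) * t ^ S n) /\ ex_series (fun n => c (S n) * t ^ S n) /\ J 0 P (g t) = / mup + (ln t * SA t + SC t)).
  { intros t Ht. destruct (H 1 (m - t) Rlt_0_1) as [E1 [E2 E3]].
    { replace (m - (m - t)) with t by ring. lra. }
    replace (m - (m - t)) with t in E1, E2, E3 by ring.
    split; [exact E1|]. split; [exact E2|].
    assert (EJ : J 0 P (g t) = Omega phi w p1 p2 (m - t)) by reflexivity.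
    rewrite EJ. unfold DeltaF in E3. unfold SA, SC. unfold Rdiv in E3. lra. }
  destruct (HF T ltac:(unfold T; lra)) as [HexA [HexC _]].
  destruct (SB (fun n => alpha (S n)) T HT Ha1 HexA) as [Ba [HBa HSa]].
  destruct (SB (fun n => c (S n)) T HT Hc1 HexC) as [Bc [HBc HSc]].
  set (M := 2 * Ba + Bc).
  assert (HM : 0 <= M) by (unfold M; lra).
  assert (Fb : forall v, 0 < v <= 1 -> v ^ 2 <= T / 2 -> Rabs (ln (v ^ 2) * SA (v ^ 2) + SC (v ^ 2)) <= M * v ^ 3).
  { intros v Hv Hv2.
    assert (Hv2' : 0 < v ^ 2) by (apply pow_lt; lra).
    specialize (HSa (v ^ 2) ltac:(lra)). specialize (HSc (v ^ 2) ltac:(lra)).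
    fold (SA (v ^ 2)) in HSa. fold (SC (v ^ 2)) in HSc.
    pose proof (lnb v Hv) as Hl.
    eapply Rle_trans; [apply Rabs_triang|]. rewrite Rabs_mult.
    assert (Hp1 : Rabs (ln (v ^ 2)) * Rabs (SA (v ^ 2)) <= (2 / v) * (Ba * (v ^ 2) ^ 2)).
    { apply Rmult_le_compat; try apply Rabs_pos; assumption. }
    replace ((2 / v) * (Ba * (v ^ 2) ^ 2)) with (2 * Ba * v ^ 3) in Hp1 by (field; lra).
    assert (Hp2 : Bc * (v ^ 2) ^ 2 <= Bc * v ^ 3).
    { apply Rmult_le_compat_l; [lra|].
      replace ((v ^ 2) ^ 2) with (v * v ^ 3) by ring.
      assert (0 <= v ^ 3) by (apply pow_le; lra). nra. }
    unfold M. lra. }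
  set (u := Rmin (Rmin 1 (eps / 4)) (K / (4 * M + 1))).
  assert (Hu0 : 0 < u).
  { unfold u. apply Rmin_pos; [apply Rmin_pos; lra| apply Rdiv_lt_0_compat; lra]. }
  assert (Hu1 : u <= 1) by (unfold u; eapply Rle_trans; [apply Rmin_l| apply Rmin_l]).
  assert (Hu2 : u <= eps / 4) by (unfold u; eapply Rle_trans; [apply Rmin_l| apply Rmin_r]).
  assert (Hu3 : u * (4 * M + 1) <= K).
  { assert (u <= K / (4 * M + 1)) by (unfold u; apply Rmin_r).
    apply Rmult_le_compat_r with (r := 4 * M + 1) in H0; [|lra].
    replace (K / (4 * M + 1) * (4 * M + 1)) with K in H0 by (field; lra). exact H0. }
  assert (Huu : u ^ 2 <= u) by (simpl; nra).
  set (t1 := u ^ 2). set (t2 := (u / 2) ^ 2).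
  assert (Ht2 : 0 < t2 < t1) by (unfold t1, t2; simpl; nra).
  assert (Ht1T : t1 <= T) by (unfold t1, T; lra).
  pose proof (Hkey t1 t2 Ht2 Ht1T) as Hk.
  destruct (HF t1 ltac:(unfold t1, T in *; lra)) as [_ [_ EJ1]].
  destruct (HF t2 ltac:(unfold t1, T in *; lra)) as [_ [_ EJ2]].
  rewrite EJ1, EJ2 in Hk.
  pose proof (Fb u ltac:(lra) ltac:(unfold T; lra)) as F1.
  pose proof (Fb (u / 2) ltac:(lra) ltac:(simpl; unfold T; nra)) as F2.
  fold t1 in F1. fold t2 in F2.
  assert (Hsum : (t1 - t2) * K <= M * (u / 2) ^ 3 + M * u ^ 3).
  { pose proof (Rle_abs (ln t2 * SA t2 + SC t2)). pose proof (Rabs_pos (ln t1 * SA t1 + SC t1)).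
    assert (- (ln t1 * SA t1 + SC t1) <= Rabs (ln t1 * SA t1 + SC t1)) by
      (rewrite <- Rabs_Ropp; apply Rle_abs).
    lra. }
  unfold t1, t2 in Hsum.
  assert (Hfin : 3 / 4 * K * u ^ 2 <= 9 / 8 * M * u ^ 3).
  { replace (3 / 4 * K * u ^ 2) with ((u ^ 2 - (u / 2) ^ 2) * K) by (simpl; field).
    replace (9 / 8 * M * u ^ 3) with (M * (u / 2) ^ 3 + M * u ^ 3) by (simpl; field). exact Hsum. }
  assert (Hfin2 : 3 / 4 * K <= 9 / 8 * M * u).
  { apply Rmult_le_reg_r with (u ^ 2); [apply pow_lt; lra|].
    replace (9 / 8 * M * u * u ^ 2) with (9 / 8 * M * u ^ 3) by ring. exact Hfin. }
  nra.
Qed.
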